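(* Let $\Gamma$ be a finite group, $\mathcal{A}$ a category, $\mathcal{A}'$ a pointed category with finite products equipped with a pseudo-action of $\Gamma$, and $f^*:\mathcal{A}\to\mathcal{A}'$ a $\Gamma$-equivariant functor (trivial action on $\mathcal{A}$) which is Cartesian. Then: (a) $f^*$ is dense; (b) for any category $\mathcal{B}$ and any two functors $a,b:\mathcal{A}'\to\mathcal{B}$, the map $f_!:\operatorname{Hom}(a,b)\to\operatorname{Hom}(af^*,bf^* )$, $u\mapsto uf^*$, between sets of natural transformations admits a canonical retraction $\rho$ (so $f_!$ is injective). Moreover, $v\in\operatorname{Hom}(af^*,bf^* )$ lies in the image of $f_!$ if and only if, for all $A\in\mathcal{A}$, $b(\epsilon_{f^*A})\circ v_{f_*f^*A}=v_A\circ a(\epsilon_{f^*A})$.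
   Context: A pseudo-action of $\Gamma$ on $\mathcal{A}'$: functors $g^*$ ($g\in\Gamma$) with coherent natural isomorphisms $c_{g,h}:h^*g^*\Rightarrow(gh)^*$; equivariance of $f^*$: natural isomorphisms $i_g:g^*f^*\Rightarrow f^*$ compatible with the $c_{g,h}$. $f^*$ is Cartesian if it has a right adjoint $f_*$ (counit $\epsilon$) and for every $C\in\mathcal{A}'$ the morphism $f^*f_*C\to\prod_{g\in\Gamma}g^*C$ with $g$-component $g^*(\epsilon_C)\circ i_g(f_*C)^{-1}$ is an isomorphism. A category is pointed if it has an object which is both initial and final. A functor $F:\mathcal{C}\to\mathcal{D}$ is dense if every object of $\mathcal{D}$ is isomorphic to a retract of $F(C)$ for some $C\in\mathcal{C}$. *)

(* Defs.v *)
From mathcomp Require Import all_boot fingroup.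

Set Implicit Arguments.
Unset Strict Implicit.
Unset Printing Implicit Defensive.

Local Open Scope group_scope.

Record Category := {
  Ob :> Type;
  Hom : Ob -> Ob -> Type;
  idm : forall x, Hom x x;
  compm : forall x y z, Hom y z -> Hom x y -> Hom x z;
  comp_id_l : forall x y (f : Hom x y), compm (idm y) f = f;
  comp_id_r : forall x y (f : Hom x y), compm f (idm x) = f;
  comp_assoc : forall x y z w (f : Hom z w) (g : Hom y z) (h : Hom x y),
      compm f (compm g h) = compm (compm f g) h
}.
Arguments Hom {c} x y.
Arguments idm {c} x.
Arguments compm {c x y z} g f.

Record Functor (C D : Category) := {
  fobj :> Ob C -> Ob D;
  fmap : forall x y, Hom x y -> Hom (fobj x) (fobj y);
  fmap_id : forall x, fmap (idm x) = idm (fobj x);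
  fmap_comp : forall x y z (g : Hom y z) (f : Hom x y),
      fmap (compm g f) = compm (fmap g) (fmap f)
}.
Arguments fmap {C D} f0 {x y} f.

Definition IdF (C : Category) : Functor C C.
Proof.
refine (@Build_Functor C C (fun x => x) (fun x y f => f) _ _); by [].
Defined.

Definition Fcomp (C D E : Category) (G : Functor D E) (F : Functor C D) :
  Functor C E.
Proof.
refine (@Build_Functor C E (fun x => G (F x)) (fun x y f => fmap G (fmap F f)) _ _).
- by move=> x; rewrite !fmap_id.
- by move=> x y z g f; rewrite !fmap_comp.
Defined.

Record NatTrans (C D : Category) (F G : Functor C D) := {
  cmp :> forall x, Hom (F x) (G x);
  natural : forall x y (f : Hom x y),
      compm (cmp y) (fmap F f) = compm (fmap G f) (cmp x)
}.

Record NatIso (C D : Category) (F G : Functor C D) := {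
  fwd :> NatTrans F G;
  bwd : forall x, Hom (G x) (F x);
  bwd_fwd : forall x, compm (bwd x) (fwd x) = idm (F x);
  fwd_bwd : forall x, compm (fwd x) (bwd x) = idm (G x)
}.

(* whiskering u |-> u F  (this is f_! in the paper) *)
Definition whisker (C D E : Category) (a b : Functor D E) (u : NatTrans a b)
  (F : Functor C D) : NatTrans (Fcomp a F) (Fcomp b F).
Proof.
refine (@Build_NatTrans C E (Fcomp a F) (Fcomp b F) (fun x => u (F x)) _).
by move=> x y f /=; rewrite natural.
Defined.

Definition is_iso (C : Category) (x y : C) (m : Hom x y) : Prop :=
  exists m' : Hom y x, compm m' m = idm x /\ compm m m' = idm y.

Definition is_initial (C : Category) (z : C) : Prop :=
  forall x : C, exists m : Hom z x, forall m' : Hom z x, m' = m.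
Definition is_final (C : Category) (z : C) : Prop :=
  forall x : C, exists m : Hom x z, forall m' : Hom x z, m' = m.

Definition pointed (C : Category) : Prop :=
  exists z : C, is_initial z /\ is_final z.

Definition is_product (C : Category) (I : Type) (X : I -> C) (P : C)
  (pi : forall i, Hom P (X i)) : Prop :=
  forall (Y : C) (h : forall i, Hom Y (X i)),
    exists m : Hom Y P, (forall i, compm (pi i) m = h i) /\
      forall m' : Hom Y P, (forall i, compm (pi i) m' = h i) -> m' = m.

Arguments is_product {C I} X P pi.

Definition has_finite_products (C : Category) : Prop :=
  forall (I : finType) (X : I -> C),
    exists (P : C) (pi : forall i, Hom P (X i)), is_product X P pi.

Definition is_retract (C : Category) (x y : C) : Prop :=
  exists (s : Hom x y) (r : Hom y x), compm r s = idm x.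

Definition dense (C D : Category) (F : Functor C D) : Prop :=
  forall d : D, exists (c : C) (r : D),
    is_retract r (F c) /\ exists m : Hom d r, is_iso m.

Definition tr (gT : finGroupType) (C : Category) (act : gT -> Functor C C)
  (g h : gT) (p : g = h) (X : C) : Hom (act g X) (act h X) :=
  match p in _ = h' return Hom (act g X) (act h' X) with
  | erefl => idm (act g X) end.

Record PseudoAction (gT : finGroupType) (C : Category) := {
  act : gT -> Functor C C;
  pc : forall g h : gT, NatIso (Fcomp (act h) (act g)) (act (g * h));
  pu : NatIso (IdF C) (act 1);
  pc_assoc : forall (g h k : gT) (X : C),
      compm (pc (g * h) k X) (fmap (act k) (pc g h X)) =
      compm (tr act (mulgA g h k) X) (compm (pc g (h * k) X) (pc h k (act g X)));
  pc_unit_l : forall (g : gT) (X : C),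
      compm (pc 1 g X) (fmap (act g) (pu X)) = tr act (esym (mul1g g)) X;
  pc_unit_r : forall (g : gT) (X : C),
      compm (pc g 1 X) (pu (act g X)) = tr act (esym (mulg1 g)) X
}.

(* Gamma-equivariance of F : C -> C' (trivial action on C): isos
   i_g : g^* F => F compatible with the c_{g,h}. *)
Record Equivariant (gT : finGroupType) (C C' : Category)
  (pa : PseudoAction gT C') (F : Functor C C') := {
  ieq : forall g : gT, NatIso (Fcomp (act pa g) F) F;
  ieq_compat : forall (g h : gT) (X : C),
      compm (ieq (g * h) X) (pc pa g h (F X)) =
      compm (ieq h X) (fmap (act pa h) (ieq g X))
}.

Record RightAdjoint (C D : Category) (F : Functor C D) := {
  radj : Functor D C;
  adj_unit : NatTrans (IdF C) (Fcomp radj F);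
  adj_counit : NatTrans (Fcomp F radj) (IdF D);
  adj_tri1 : forall x : C,
      compm (adj_counit (F x)) (fmap F (adj_unit x)) = idm (F x);
  adj_tri2 : forall y : D,
      compm (fmap radj (adj_counit y)) (adj_unit (radj y)) = idm (radj y)
}.

(* Cartesian: for every C0, the morphism f^* f_* C0 -> prod_g g^* C0 with
   g-component g^*(eps_C0) o i_g(f_* C0)^{-1} is an isomorphism
   (for any choice of product of the family g |-> g^* C0). *)
Definition Cartesian (gT : finGroupType) (C C' : Category)
  (pa : PseudoAction gT C') (F : Functor C C') (eqv : Equivariant pa F)
  (adj : RightAdjoint F) : Prop :=
  forall (C0 : C') (P : C') (pi : forall g : gT, Hom P (act pa g C0)),
    is_product (fun g => act pa g C0) P pi ->
    forall m : Hom (F (radj adj C0)) P,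
      (forall g : gT, compm (pi g) m =
         compm (fmap (act pa g) (adj_counit adj C0)) (bwd (ieq eqv g) (radj adj C0))) ->
      is_iso m.

(* Main.v *)
Require Import Defs.
From mathcomp Require Import all_boot fingroup.
From Stdlib Require Import ClassicalEpsilon FunctionalExtensionality ProofIrrelevance.
Set Implicit Arguments. Unset Strict Implicit.

Lemma nt_eq (C D : Category) (F G : Functor C D) (u w : NatTrans F G) :
  (forall x, u x = w x) -> u = w.
Proof.
case: u w => [u nu] [w nw] /= H.
have E := functional_extensionality_dep _ _ H; subst w.
by rewrite (proof_irrelevance _ nu nw).
Qed.

Lemma bwd_nat (C D : Category) (F G : Functor C D) (e : NatIso F G) x y (f : Hom x y) :
  compm (bwd e y) (fmap G f) = compm (fmap F f) (bwd e x).
Proof.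
have H := natural (fwd e) f.
rewrite -[compm (bwd e y) _]comp_id_r -(fwd_bwd e x) comp_assoc.
rewrite -[compm (compm (bwd e y) _) _]comp_assoc -H.
by rewrite !comp_assoc bwd_fwd comp_id_l.
Qed.

Lemma prod_choice (gT: finGroupType) (A': Category) (ac: gT -> A' -> A')
  (Hfp: has_finite_products A') : { PP : A' -> A' & { ppi : forall X g, Hom (PP X) (ac g X) |
    forall X, is_product (fun g => ac g X) (PP X) (ppi X) } }.
Proof.
exists (fun X => proj1_sig (constructive_indefinite_description _ (Hfp gT (fun g => ac g X)))).
exists (fun X => proj1_sig (constructive_indefinite_description _ (proj2_sig (constructive_indefinite_description _ (Hfp gT (fun g => ac g X)))))).
move=> X.
exact: (proj2_sig (constructive_indefinite_description _ (proj2_sig (constructive_indefinite_description _ (Hfp gT (fun g => ac g X)))))).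
Qed.

Lemma prod_ext (C : Category) (I : Type) (X : I -> C) P pi (H : is_product X P pi)
  Y (u w : Hom Y P) : (forall i, compm (pi i) u = compm (pi i) w) -> u = w.
Proof.
move=> E; have [m [_ Hm]] := H Y (fun i => compm (pi i) w).
by rewrite (Hm u E) (Hm w (fun i => erefl)).
Qed.

Lemma rw2 (C : Category) (x y z z' w : C) (f : Hom z w) (g : Hom y z)
  (f' : Hom z' w) (g' : Hom y z') (h : Hom x y) :
  compm f g = compm f' g' -> compm f (compm g h) = compm f' (compm g' h).
Proof. by move=> E; rewrite !comp_assoc E. Qed.

Lemma cancel2 (C : Category) (x y z : C) (f : Hom y z) (g : Hom z y) (h : Hom x z) :
  compm f g = idm z -> compm f (compm g h) = h.
Proof. by move=> E; rewrite comp_assoc E comp_id_l. Qed.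

Lemma mono_linv (C : Category) (x y w : C) (m : Hom x y) (l : Hom y x) (u v : Hom w x) :
  compm l m = idm x -> compm m u = compm m v -> u = v.
Proof.
move=> Hl E; rewrite -(comp_id_l u) -(comp_id_l v) -Hl -!comp_assoc E //.
Qed.

Theorem lemma2p8 (gT : finGroupType) (A A' : Category)
  (pa : PseudoAction gT A') (fs : Functor A A')
  (eqv : Equivariant pa fs) (adj : RightAdjoint fs) :
  pointed A' -> has_finite_products A' -> Cartesian eqv adj ->
  dense fs /\
  (forall (B : Category) (a b : Functor A' B),
     (exists rho : NatTrans (Fcomp a fs) (Fcomp b fs) -> NatTrans a b,
        forall u : NatTrans a b, rho (whisker u fs) = u) /\
     (forall v : NatTrans (Fcomp a fs) (Fcomp b fs),
        (exists u : NatTrans a b, whisker u fs = v) <->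
        (forall X : A,
           compm (fmap b (adj_counit adj (fs X))) (v (radj adj (fs X))) =
           compm (v X) (fmap a (adj_counit adj (fs X)))))).
Proof.
move=> [z [zi zf]] Hfp Hcart.
have [zin Hzin] : {zin : forall X : A', Hom z X | forall X m, m = zin X}.
  exists (fun X => proj1_sig (constructive_indefinite_description _ (zi X))).
  move=> X; exact: (proj2_sig (constructive_indefinite_description _ (zi X))).
have [zout Hzout] : {zout : forall X : A', Hom X z | forall X m, m = zout X}.
  exists (fun X => proj1_sig (constructive_indefinite_description _ (zf X))).
  move=> X; exact: (proj2_sig (constructive_indefinite_description _ (zf X))).
have [PP [ppi Hprod]] := prod_choice (fun g X => act pa g X) Hfp.
pose h X g : Hom X (act pa g X) :=
  match @eqP _ (1%g:gT) g with
  | ReflectT p => compm (tr (act pa) p X) (pu pa X)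
  | ReflectF _ => compm (zin _) (zout X) end.
have h_nat : forall X Y (f : Hom X Y) g,
    compm (fmap (act pa g) f) (h X g) = compm (h Y g) f.
  move=> X Y f g; rewrite /h; case: eqP => [p|np].
    subst g => /=; rewrite !comp_id_l.
    by have /= := natural (pu pa) f => ->.
  rewrite comp_assoc (Hzin _ (compm (fmap _ f) (zin _))).
  by rewrite -comp_assoc (Hzout _ (compm (zout Y) f)).
have h1 : forall X, h X 1%g = pu pa X.
  move=> X; rewrite /h; case: eqP => [p|//].
  by rewrite (eq_irrelevance p erefl) /= comp_id_l.
pose comp X g := compm (fmap (act pa g) (adj_counit adj X)) (bwd (ieq eqv g) (radj adj X)).
have [mm Hmm] : {mm : forall X, Hom (fs (radj adj X)) (PP X) |
    forall X g, compm (ppi X g) (mm X) = comp X g}.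
  exists (fun X => proj1_sig (constructive_indefinite_description _ (Hprod X _ (comp X)))).
  move=> X; exact: (proj1 (proj2_sig (constructive_indefinite_description _ (Hprod X _ (comp X))))).
have [mi [Hmi1 Hmi2]] : {mi : forall X, Hom (PP X) (fs (radj adj X)) |
    (forall X, compm (mi X) (mm X) = idm _) /\ (forall X, compm (mm X) (mi X) = idm _)}.
  pose c X := constructive_indefinite_description _ (Hcart X (PP X) (ppi X) (Hprod X) (mm X) (Hmm X)).
  exists (fun X => proj1_sig (c X)); split=> X; [exact: (proj1 (proj2_sig (c X)))|exact: (proj2 (proj2_sig (c X)))].
have [sg Hsg] : {sg : forall X, Hom X (PP X) | forall X g, compm (ppi X g) (sg X) = h X g}.
  exists (fun X => proj1_sig (constructive_indefinite_description _ (Hprod X _ (h X)))).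
  move=> X; exact: (proj1 (proj2_sig (constructive_indefinite_description _ (Hprod X _ (h X))))).
pose s X := compm (bwd (pu pa) (fs (radj adj X))) (compm (bwd (ieq eqv 1%g) (radj adj X)) (compm (mi X) (sg X))).
have Heps : forall X, compm (adj_counit adj X) (s X) = idm X.
  move=> X; rewrite /s.
  have E1 := bwd_nat (pu pa) (adj_counit adj X); simpl in E1.
  rewrite (rw2 _ (esym E1)) (rw2 _ (esym (Hmm X 1%g))) [compm (mm X) _]comp_assoc Hmi2 comp_id_l.
  rewrite Hsg h1; exact: (bwd_fwd (pu pa) X).
have Hmnat : forall X Y (f : Hom X Y) g,
    compm (ppi Y g) (compm (mm Y) (fmap fs (fmap (radj adj) f))) =
    compm (fmap (act pa g) f) (compm (ppi X g) (mm X)).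
  move=> X Y f g.
  rewrite comp_assoc Hmm [compm (ppi X g) _]Hmm /comp -comp_assoc.
  rewrite (bwd_nat (ieq eqv g) (fmap (radj adj) f)) /= comp_assoc -fmap_comp.
  have En := natural (adj_counit adj) f; simpl in En.
  by rewrite En fmap_comp -comp_assoc.
pose psi X := compm (mm X) (compm (ieq eqv 1%g (radj adj X)) (pu pa (fs (radj adj X)))).
have Hpsis : forall X, compm (psi X) (s X) = sg X.
  move=> X; rewrite /psi /s -!comp_assoc.
  rewrite (cancel2 _ (fwd_bwd (pu pa) _)) (cancel2 _ (fwd_bwd (ieq eqv 1%g) _)).
  by rewrite (cancel2 _ (Hmi2 X)).
have Hpsiinj : forall X W (u v : Hom W (fs (radj adj X))), compm (psi X) u = compm (psi X) v -> u = v.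
  move=> X W u v; apply: (mono_linv (l := compm (bwd (pu pa) _) (compm (bwd (ieq eqv 1%g) _) (mi X)))).
  rewrite /psi -!comp_assoc (cancel2 _ (Hmi1 X)) (cancel2 _ (bwd_fwd (ieq eqv 1%g) _)).
  exact: (bwd_fwd (pu pa) _).
have Hpsinat : forall X Y (f : Hom X Y) g,
    compm (ppi Y g) (compm (psi Y) (fmap fs (fmap (radj adj) f))) =
    compm (fmap (act pa g) f) (compm (ppi X g) (psi X)).
  move=> X Y f g; rewrite /psi -!comp_assoc.
  have En1 := natural (pu pa) (fmap fs (fmap (radj adj) f)); simpl in En1.
  have En2 := natural (fwd (ieq eqv 1%g)) (fmap (radj adj) f); simpl in En2.
  rewrite En1 (rw2 _ En2) [compm (mm Y) _]comp_assoc [compm (ppi Y g) _]comp_assoc Hmnat.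
  by rewrite -!comp_assoc.
have Hsnat : forall X Y (f : Hom X Y),
    compm (s Y) f = compm (fmap fs (fmap (radj adj) f)) (s X).
  move=> X Y f; apply: (Hpsiinj Y).
  rewrite comp_assoc Hpsis [RHS]comp_assoc.
  apply: (prod_ext (Hprod Y)) => g.
  rewrite comp_assoc Hsg [RHS]comp_assoc Hpsinat.
  rewrite -comp_assoc -[compm (compm (ppi X g) (psi X)) (s X)]comp_assoc Hpsis Hsg.
  by rewrite h_nat.
split.
  move=> d; exists (radj adj d), d; split.
    by exists (s d), (adj_counit adj d); apply: Heps.
  by exists (idm d), (idm d); rewrite comp_id_l.
move=> B a b.
pose rhoc (v : NatTrans (Fcomp a fs) (Fcomp b fs)) X :=
  compm (fmap b (adj_counit adj X)) (compm (v (radj adj X)) (fmap a (s X))).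
have rho_nat : forall v X Y (f : Hom X Y),
    compm (rhoc v Y) (fmap a f) = compm (fmap b f) (rhoc v X).
  move=> v X Y f; rewrite /rhoc -!comp_assoc -(fmap_comp a (s Y) f) Hsnat (fmap_comp a).
  have En := natural v (fmap (radj adj) f); simpl in En.
  have En' := natural (adj_counit adj) f; simpl in En'.
  have E3 : compm (fmap b (adj_counit adj Y)) (fmap b (fmap fs (fmap (radj adj) f))) =
            compm (fmap b f) (fmap b (adj_counit adj X)).
    by rewrite -!(fmap_comp b) En'.
  by rewrite (rw2 _ En) (rw2 _ E3).
pose rho v := @Build_NatTrans _ _ a b (rhoc v) (rho_nat v).
split.
  exists rho => u; apply: nt_eq => X /=; rewrite /rhoc /=.
  have En := natural u (adj_counit adj X); simpl in En.
  rewrite comp_assoc -En -comp_assoc -fmap_comp Heps fmap_id.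
  exact: comp_id_r.
move=> v; split.
  move=> [u <-] X /=.
  have En := natural u (adj_counit adj (fs X)); simpl in En.
  by rewrite En.
move=> H; exists (rho v); apply: nt_eq => Y /=; rewrite /rhoc.
rewrite comp_assoc H -comp_assoc -fmap_comp Heps fmap_id.
exact: comp_id_r.
Qed.
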